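(* Let $(\mathfrak{A},\varphi,\tau)$ be a $*$-dynamical system and let $\mathfrak{S}$ and $\mathfrak{T}$ be $\varphi$-total sets in $\mathfrak{A}$. Then: (i) If $(\mathfrak{A},\varphi,\tau)$ is ergodic, then $\frac1n\sum_{k=0}^{n-1}\varphi\left(A\tau^k(B)\right)\to\varphi(A)\varphi(B)$ as $n\to\infty$ for all $A,B\in\mathfrak{A}$. (ii) If $\frac1n\sum_{k=0}^{n-1}\varphi\left(A\tau^k(B)\right)\to\varphi(A)\varphi(B)$ as $n\to\infty$ for all $A\in\mathfrak{S}^*$ and $B\in\mathfrak{T}$, then $(\mathfrak{A},\varphi,\tau)$ is ergodic.
   Context: All algebras are over $\mathbb{C}$. A state on a unital $*$-algebra $\mathfrak{A}$ is a linear functional $\varphi$ with $\varphi(A^*A)\ge0$ for all $A$ and $\varphi(1)=1$. A $*$-dynamical system is a triple $(\mathfrak{A},\varphi,\tau)$ with $\mathfrak{A}$ a unital $*$-algebra, $\varphi$ a state, and $\tau:\mathfrak{A}\to\mathfrak{A}$ linear with $\tau(1)=1$ and $\varphi(\tau(A)^*\tau(A))\le\varphi(A^*A)$ for all $A$. Let $\|A\|_\varphi=\sqrt{\varphi(A^*A)}$ and identify $\alpha\in\mathbb{C}$ with $\alpha1$. The system is ergodic if for every sequence $(A_n)$ with $\|\tau(A_n)-A_n\|_\varphi\to0$ which is Cauchy for $\|\cdot\|_\varphi$ (for every $\varepsilon>0$ there is $N$ with $\|A_m-A_n\|_\varphi\le\varepsilon$ for $m,n>N$), there is $\alpha\in\mathbb{C}$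 with $\|A_n-\alpha\|_\varphi\to0$. A subset of $\mathfrak{A}$ is $\varphi$-total if its linear span is dense in the seminormed space $(\mathfrak{A},\|\cdot\|_\varphi)$. For $\mathfrak{S}\subseteq\mathfrak{A}$, $\mathfrak{S}^*=\{A^*:A\in\mathfrak{S}\}$. *)

(* Defs.v *)
(* The complex field is modelled as  R[i] = complex R  for an
   arbitrary R : realType (every realType is a complete archimedean ordered
   field, hence isomorphic to the reals, so R[i] is isomorphic to C). *)
From HB Require Import structures.
From mathcomp Require Import all_boot all_order all_algebra.
From mathcomp Require Import reals.
From mathcomp.real_closed Require Import complex.
Set Implicit Arguments. Unset Strict Implicit. Unset Printing Implicit Defensive.
Import Order.TTheory GRing.Theory Num.Theory.
Local Open Scope ring_scope.
Local Open Scope complex_scope.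

Section Defs.
Variable R : realType.
Local Notation C := (R[i]).

Definition is_star (A : algType C) (star : A -> A) : Prop :=
  [/\ forall x y : A, star (x + y) = star x + star y,
      forall (c : C) (x : A), star (c *: x) = (c^*)%C *: star x,
      forall x y : A, star (x * y) = star y * star x &
      forall x : A, star (star x) = x].

Definition is_lin_functional (A : algType C) (phi : A -> C) : Prop :=
  forall (c : C) (x y : A), phi (c *: x + y) = c * phi x + phi y.

Definition is_lin_map (A : algType C) (tau : A -> A) : Prop :=
  forall (c : C) (x y : A), tau (c *: x + y) = c *: tau x + tau y.

Definition is_state (A : algType C) (star : A -> A) (phi : A -> C) : Prop :=
  [/\ is_lin_functional phi, forall x : A, 0 <= phi (star x * x) & phi 1 = 1].

Definition is_star_dyn_system (A : algType C) (star : A -> A) (phi : A -> C)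
    (tau : A -> A) : Prop :=
  [/\ is_star star, is_state star phi, is_lin_map tau, tau 1 = 1 &
      forall x : A, phi (star (tau x) * tau x) <= phi (star x * x)].

Definition phinorm (A : algType C) (star : A -> A) (phi : A -> C) (x : A) : C :=
  sqrtC (phi (star x * x)).

Definition cvgC (u : nat -> C) (l : C) : Prop :=
  forall e : R, 0 < e -> exists N : nat, forall n : nat, (N <= n)%N ->
    `|u n - l| < e%:C.

Definition phi_cauchy (A : algType C) (star : A -> A) (phi : A -> C)
    (a : nat -> A) : Prop :=
  forall e : R, 0 < e -> exists N : nat, forall m n : nat, (N < m)%N -> (N < n)%N ->
    phinorm star phi (a m - a n) <= e%:C.

Definition ergodic (A : algType C) (star : A -> A) (phi : A -> C)
    (tau : A -> A) : Prop :=
  forall a : nat -> A,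
    cvgC (fun n => phinorm star phi (tau (a n) - a n)) 0 ->
    phi_cauchy star phi a ->
    exists alpha : C, cvgC (fun n => phinorm star phi (a n - alpha%:A)) 0.

Definition phi_total (A : algType C) (star : A -> A) (phi : A -> C)
    (S : A -> Prop) : Prop :=
  forall (x : A) (e : R), 0 < e ->
    exists (n : nat) (c : 'I_n -> C) (s : 'I_n -> A),
      (forall i, S (s i)) /\
      phinorm star phi (x - \sum_(i < n) c i *: s i) < e%:C.

Definition cesaro_corr (A : algType C) (phi : A -> C) (tau : A -> A)
    (x y : A) (n : nat) : C :=
  (n%:R)^-1 * \sum_(k < n) phi (x * iter k tau y).

End Defs.

(* Main.v *)
Require Import Defs.
From HB Require Import structures.
From mathcomp Require Import all_boot all_order all_algebra.
From mathcomp Require Import reals.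
From mathcomp.real_closed Require Import complex.
From mathcomp Require Import ring lra.
From mathcomp Require Import classical_sets boolp.
Import Order.TTheory GRing.Theory Num.Theory.
Local Open Scope ring_scope.
Local Open Scope complex_scope.
Local Notation Re := complex.Re.
Local Notation Im := complex.Im.

Module Aux.
Set Implicit Arguments. Unset Strict Implicit.
Section Cx.
Variable R : realType.
Local Notation C := R[i].

Definition md (z : C) : R := Re `|z|.

Lemma ReD (x y : C) : Re (x + y) = Re x + Re y. Proof. by case: x; case: y. Qed.
Lemma ImD (x y : C) : Im (x + y) = Im x + Im y. Proof. by case: x; case: y. Qed.
Lemma ReN (x : C) : Re (- x) = - Re x. Proof. by case: x. Qed.
Lemma ImN (x : C) : Im (- x) = - Im x. Proof. by case: x. Qed.
Lemma ReB (x y : C) : Re (x - y) = Re x - Re y. Proof. by rewrite ReD ReN. Qed.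
Lemma ImB (x y : C) : Im (x - y) = Im x - Im y. Proof. by rewrite ImD ImN. Qed.
Lemma ReRM (r : R) (x : C) : Re (r%:C * x) = r * Re x.
Proof. by case: x => a b /=; rewrite mul0r subr0. Qed.
Lemma ImRM (r : R) (x : C) : Im (r%:C * x) = r * Im x.
Proof. by case: x => a b /=; rewrite mul0r addr0. Qed.
Lemma ReJ (x : C) : Re (x^*)%C = Re x. Proof. by case: x. Qed.
Lemma ImJ (x : C) : Im (x^*)%C = - Im x. Proof. by case: x. Qed.
Lemma ReiM (x : C) : Re ('i * x) = - Im x.
Proof. by case: x => a b /=; rewrite !mul0r !mul1r sub0r. Qed.
Lemma ImiM (x : C) : Im ('i * x) = Re x.
Proof. by case: x => a b /=; rewrite !mul0r !mul1r add0r. Qed.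
Lemma Re_real (r : R) : Re r%:C = r. Proof. by []. Qed.
Lemma Im_real (r : R) : Im r%:C = 0. Proof. by []. Qed.
Lemma ReM (x y : C) : Re (x * y) = Re x * Re y - Im x * Im y.
Proof. by case: x; case: y. Qed.
Lemma ImM (x y : C) : Im (x * y) = Re x * Im y + Im x * Re y.
Proof. by case: x => a b; case: y => c d /=; rewrite addrC. Qed.

Lemma ceq (x y : C) : Re x = Re y -> Im x = Im y -> x = y.
Proof. by case: x; case: y => /= ? ? ? ? -> ->. Qed.

Lemma mdE (z : C) : `|z| = (md z)%:C.
Proof. rewrite /md; move: (normc_def z) => ->. simpl Re. reflexivity. Qed.
Lemma md_def (z : C) : md z = Num.sqrt (Re z ^+ 2 + Im z ^+ 2).
Proof. rewrite /md; move: (normc_def z) => ->. simpl Re. reflexivity. Qed.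
Lemma md_ge0 (z : C) : 0 <= md z.
Proof. by rewrite md_def sqrtr_ge0. Qed.
Lemma mdD (x y : C) : md (x + y) <= md x + md y.
Proof. by rewrite -lecR rmorphD /= -!mdE ler_normD. Qed.
Lemma mdM (x y : C) : md (x * y) = md x * md y.
Proof. by apply: complexI; rewrite rmorphM /= -!mdE normrM. Qed.
Lemma mdN (x : C) : md (- x) = md x.
Proof. by rewrite /md normrN. Qed.
Lemma mdB (x y : C) : md (x - y) = md (y - x).
Proof. by rewrite -mdN opprB. Qed.
Lemma md_real (r : R) : md r%:C = `|r|.
Proof. by rewrite md_def /= expr0n addr0 sqrtr_sqr. Qed.
Lemma md_i : md 'i = 1.
Proof. rewrite md_def. change (Num.sqrt (0 ^+ 2 + 1 ^+ 2 : R) = 1). by rewrite expr0n expr1n add0r sqrtr1. Qed.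

Lemma sqrt_le_add (a b : R) : Num.sqrt (a ^+ 2 + b ^+ 2) <= `|a| + `|b|.
Proof.
rewrite -(ger0_norm (addr_ge0 (normr_ge0 a) (normr_ge0 b))).
rewrite -sqrtr_sqr ler_wsqrtr // -(real_normK (num_real a)) -(real_normK (num_real b)).
have := normr_ge0 a; have := normr_ge0 b; nra.
Qed.
Lemma md_le (z : C) : md z <= `|Re z| + `|Im z|.
Proof. by rewrite md_def sqrt_le_add. Qed.
Lemma Re_le_md (z : C) : `|Re z| <= md z.
Proof. rewrite md_def -sqrtr_sqr ler_wsqrtr // lerDl sqr_ge0 //. Qed.
Lemma Im_le_md (z : C) : `|Im z| <= md z.
Proof. rewrite md_def -sqrtr_sqr ler_wsqrtr // lerDr sqr_ge0 //. Qed.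
Lemma md_sqr (z : C) : md z ^+ 2 = Re z ^+ 2 + Im z ^+ 2.
Proof. by rewrite md_def sqr_sqrtr // addr_ge0 // sqr_ge0. Qed.
Lemma conjM_self (z : C) : (z^*)%C * z = (md z ^+ 2)%:C.
Proof. apply: ceq; rewrite ?md_sqr ?ReM ?ImM ?ReJ ?ImJ ?Re_real ?Im_real; lra. Qed.

Lemma sqrtC_real (r : R) : 0 <= r -> sqrtC r%:C = (Num.sqrt r)%:C.
Proof.
move=> r0; rewrite -{1}(sqr_sqrtr r0) rmorphXn /= sqrCK // ler0c sqrtr_ge0 //.
Qed.
Lemma conj_i : ('i^*)%C = - 'i :> C.
Proof. by apply: ceq; rewrite ?ReN ?ImN /= ?oppr0. Qed.

Lemma quad_disc (a b c : R) : 0 <= a -> 0 <= c ->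
  (forall t : R, 0 <= a + 2 * b * t + c * t ^+ 2) -> b ^+ 2 <= a * c.
Proof.
move=> a0 c0 h; have [c_eq0|c_gt0] := eqVneq c 0.
  rewrite c_eq0 mulr0.
  have [b0|bn0] := eqVneq b 0; first by rewrite b0 expr0n.
  set t := - (a + 1) / (2 * b).
  have ht : 2 * b * t = - (a + 1).
    by rewrite mulrC /t divfK // mulf_neq0 // pnatr_eq0.
  have := h t; rewrite c_eq0 mul0r addr0 ht => H; lra.
have cp : 0 < c by rewrite lt_def c_gt0 c0.
set u := b / c; have hu : u * c = b by rewrite /u divfK.
have := h (- u); rewrite -hu => H.
nra.
Qed.

Lemma lin_zero (d K : R) : 0 <= K -> (forall t : R, 2 * t * d <= t ^+ 2 * K) -> d = 0.
Proof.
move=> K0 h; set t := d / (K + 1).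
have ht : t * (K + 1) = d by rewrite /t divfK // gt_eqF // ltr_wpDl.
have := h t; rewrite -ht => H.
have t0 : t ^+ 2 * (K + 2) <= 0.
  have -> : t ^+ 2 * (K + 2) = 2 * t * (t * (K + 1)) - t ^+ 2 * K by ring.
  by rewrite subr_le0.
have : t ^+ 2 <= 0.
  have K2 : 0 < K + 2 by lra.
  by rewrite -(pmulr_lle0 _ K2).
rewrite le_eqVlt ltNge sqr_ge0 orbF sqrf_eq0 => /eqP ->; by rewrite mul0r.
Qed.

Lemma cvgCP (u : nat -> C) l :
  cvgC u l <-> (forall e : R, 0 < e -> exists N, forall n, (N <= n)%N -> md (u n - l) < e).
Proof.
split=> h e /h [N hN]; exists N => n /hN; by rewrite mdE ltcR.
Qed.

Lemma cvgC_ext (u v : nat -> C) l : (forall n, u n = v n) -> cvgC u l -> cvgC v l.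
Proof. by move=> e h x /h [N hN]; exists N => n /hN; rewrite e. Qed.

Lemma cvgC_add (u v : nat -> C) l l' :
  cvgC u l -> cvgC v l' -> cvgC (fun n => u n + v n) (l + l').
Proof.
move=> /cvgCP hu /cvgCP hv; apply/cvgCP => e e0.
have e2 : 0 < e / 2 by rewrite divr_gt0.
have [N1 h1] := hu _ e2; have [N2 h2] := hv _ e2.
exists (maxn N1 N2) => n; rewrite geq_max => /andP[n1 n2].
have -> : u n + v n - (l + l') = (u n - l) + (v n - l') by rewrite opprD addrACA.
apply: le_lt_trans (mdD _ _) _.
have := h1 _ n1; have := h2 _ n2; lra.
Qed.

Lemma cvgC_scale (u : nat -> C) l c : cvgC u l -> cvgC (fun n => c * u n) (c * l).
Proof.
move=> /cvgCP hu; apply/cvgCP => e e0.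
have e1 : 0 < e / (md c + 1) by rewrite divr_gt0 // ltr_wpDl // md_ge0.
have [N hN] := hu _ e1; exists N => n /hN h.
rewrite -mulrBr mdM.
have hc := md_ge0 c.
apply: le_lt_trans (_ : md c * (e / (md c + 1)) < e); last first.
  rewrite mulrA ltr_pdivrMr ?ltr_wpDl //; nra.
by rewrite ler_wpM2l // ltW.
Qed.

Lemma cvgC_const (l : C) : cvgC (fun _ => l) l.
Proof. by move=> e e0; exists 0%N => n _; rewrite subrr normr0 ltcR. Qed.

Lemma cvgC_sum m (u : 'I_m -> nat -> C) (l : 'I_m -> C) :
  (forall i, cvgC (u i) (l i)) ->
  cvgC (fun n => \sum_(i < m) u i n) (\sum_(i < m) l i).
Proof.
elim: m u l => [|m IH] u l h.
  apply: (@cvgC_ext (fun _ => 0)); first by move=> n; rewrite big_ord0.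
  by rewrite big_ord0; exact: cvgC_const.
apply: (@cvgC_ext (fun n => \sum_(i < m) u (widen_ord (leqnSn m) i) n + u ord_max n)).
  by move=> n; rewrite big_ord_recr.
rewrite big_ord_recr /=; apply: cvgC_add; last exact: h.
by apply: (IH (fun i => u (widen_ord (leqnSn m) i)) (fun i => l (widen_ord (leqnSn m) i))) => i; exact: h.
Qed.

Lemma cvgC_approx (u : nat -> C) l :
  (forall d : R, 0 < d -> exists (v : nat -> C) (l' : C),
     [/\ cvgC v l', forall n, md (u n - v n) <= d & md (l - l') <= d]) ->
  cvgC u l.
Proof.
move=> h; apply/cvgCP => e e0.
have e3 : 0 < e / 3 by rewrite divr_gt0.
have [v [l' [/cvgCP hv huv hl]]] := h _ e3.
have [N hN] := hv _ e3; exists N => n /hN hn.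
have -> : u n - l = (u n - v n) + ((v n - l') + (l' - l)).
  by rewrite !addrA !subrK.
apply: le_lt_trans (mdD _ _) _; apply: le_lt_trans (lerD (lexx _) (mdD _ _)) _.
rewrite (mdB l') ; have := huv n; lra.
Qed.

Lemma cauchyR (r : nat -> R) :
  (forall e : R, 0 < e -> exists N, forall m n, (N <= m)%N -> (N <= n)%N -> `|r m - r n| <= e) ->
  exists l : R, forall e : R, 0 < e -> exists N, forall n, (N <= n)%N -> `|r n - l| <= e.
Proof.
move=> h.
pose E : set R := fun x => exists N, forall n, (N <= n)%N -> x <= r n.
have [N1 hN1] := h 1 ltr01.
have hE : has_ubound E.
  exists (r N1 + 1) => x [N hN]; have := hN (maxn N N1) (leq_maxl _ _).
  have := hN1 (maxn N N1) N1 (leq_maxr _ _) (leqnn _).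
  rewrite ler_norml => /andP[_ ?]; lra.
exists (sup E) => e e0.
have e2 : 0 < e / 2 by rewrite divr_gt0.
have [N0 hN0] := h _ e2.
have inE : E (r N0 - e / 2).
  exists N0 => n hn; have := hN0 n N0 hn (leqnn _); rewrite ler_norml => /andP[? _]; lra.
have lb : r N0 - e / 2 <= sup E by apply: ub_le_sup.
have ub : sup E <= r N0 + e / 2.
  apply: ge_sup; first by exists (r N0 - e / 2).
  move=> x [N hN]; have := hN (maxn N N0) (leq_maxl _ _).
  have := hN0 (maxn N N0) N0 (leq_maxr _ _) (leqnn _).
  rewrite ler_norml => /andP[_ ?]; lra.
exists N0 => n hn; have := hN0 n N0 hn (leqnn _).
rewrite !ler_norml => /andP[? ?]; apply/andP; split; lra.
Qed.

Lemma cauchyC (u : nat -> C) :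
  (forall e : R, 0 < e -> exists N, forall m n, (N <= m)%N -> (N <= n)%N -> md (u m - u n) <= e) ->
  exists l : C, forall e : R, 0 < e -> exists N, forall n, (N <= n)%N -> md (u n - l) <= e.
Proof.
move=> h.
have [lr hr] : exists l : R, forall e : R, 0 < e -> exists N, forall n, (N <= n)%N -> `|Re (u n) - l| <= e.
  apply: cauchyR => e /h [N hN]; exists N => m n hm hn.
  by rewrite -ReB; apply: le_trans (Re_le_md _) (hN _ _ hm hn).
have [li hi] : exists l : R, forall e : R, 0 < e -> exists N, forall n, (N <= n)%N -> `|Im (u n) - l| <= e.
  apply: cauchyR => e /h [N hN]; exists N => m n hm hn.
  by rewrite -ImB; apply: le_trans (Im_le_md _) (hN _ _ hm hn).
exists (lr +i* li) => e e0.
have e2 : 0 < e / 2 by rewrite divr_gt0.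
have [N1 h1] := hr _ e2; have [N2 h2] := hi _ e2.
exists (maxn N1 N2) => n; rewrite geq_max => /andP[n1 n2].
apply: le_trans (md_le _) _; rewrite ReB ImB /=.
have := h1 _ n1; have := h2 _ n2; lra.
Qed.

Lemma small_inv (e : R) : 0 < e -> exists N, forall n, (N <= n)%N -> (n.+1%:R : R)^-1 < e.
Proof.
move=> e0; exists (Num.Def.archi_bound (e^-1)) => n hn.
have ie : 0 <= e^-1 by rewrite invr_ge0 ltW.
have h1 := archi_boundP ie.
have h2 : (Num.Def.archi_bound e^-1)%:R <= (n.+1%:R : R) by rewrite ler_nat (leq_trans hn).
rewrite -[X in X < _]mul1r ltr_pdivrMr ?ltr0Sn //.
have : e^-1 < n.+1%:R by apply: lt_le_trans h1 h2.
rewrite -[X in X < _]mul1r ltr_pdivrMr // mulrC //.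
Qed.

Lemma sum_widen (V : zmodType) (F : nat -> V) L L' :
  (L <= L')%N -> (forall k, (L <= k)%N -> F k = 0) ->
  \sum_(k < L') F k = \sum_(k < L) F k.
Proof.
move=> LL hF; rewrite (big_ord_widen _ F LL) [RHS]big_mkcond; apply: eq_bigr => i _.
by case: ifP => // /negbT; rewrite -leqNgt => /hF ->.
Qed.

Lemma md0 (z : C) : md z = 0 -> z = 0.
Proof. by move=> h; apply/eqP; rewrite -normr_eq0 mdE h. Qed.

Lemma md_small (z : C) : (forall e : R, 0 < e -> md z <= e) -> z = 0.
Proof.
move=> h; apply: md0; have := md_ge0 z; rewrite le_eqVlt => /orP[/eqP <- //|zp].
have := h _ (divr_gt0 zp (ltr0Sn _ 1)); lra.
Qed.

Lemma sub3 (V : zmodType) (u v w z : V) : u - z = (u - v) + ((v - w) + (w - z)).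
Proof. by rewrite !addrA !subrK. Qed.
Lemma subsub (V : zmodType) (x y z : V) : (x - z) - (y - z) = x - y.
Proof. by rewrite opprB addrA subrK. Qed.
End Cx.

Unset Implicit Arguments. Set Strict Implicit.
Section Sys.
Variable R : realType.
Local Notation C := R[i].
Variables (A : algType C) (star : A -> A) (phi : A -> C) (tau : A -> A).
Hypothesis H : is_star_dyn_system star phi tau.

Lemma starD x y : star (x + y) = star x + star y.
Proof. by case: H => [[h _ _ _] _ _ _ _]; apply: h. Qed.
Lemma starZ c x : star (c *: x) = (c^*)%C *: star x.
Proof. by case: H => [[_ h _ _] _ _ _ _]; apply: h. Qed.
Lemma starM x y : star (x * y) = star y * star x.
Proof. by case: H => [[_ _ h _] _ _ _ _]; apply: h. Qed.
Lemma starK x : star (star x) = x.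
Proof. by case: H => [[_ _ _ h] _ _ _ _]; apply: h. Qed.
Lemma phiL c x y : phi (c *: x + y) = c * phi x + phi y.
Proof. by case: H => [_ [h _ _] _ _ _]; apply: h. Qed.
Lemma phi_pos x : 0 <= phi (star x * x).
Proof. by case: H => [_ [_ h _] _ _ _]; apply: h. Qed.
Lemma phi1 : phi 1 = 1.
Proof. by case: H => [_ [_ _ h] _ _ _]; apply: h. Qed.
Lemma tauL c x y : tau (c *: x + y) = c *: tau x + tau y.
Proof. by case: H => [_ _ h _ _]; apply: h. Qed.
Lemma tau1 : tau 1 = 1.
Proof. by case: H => [_ _ _ h _]; apply: h. Qed.
Lemma tau_contr x : phi (star (tau x) * tau x) <= phi (star x * x).
Proof. by case: H => [_ _ _ _ h]; apply: h. Qed.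

Lemma star0 : star 0 = 0.
Proof. by have := starD 0 0; rewrite addr0 => /eqP; rewrite -subr_eq subrr eq_sym => /eqP. Qed.
Lemma starN x : star (- x) = - star x.
Proof. by rewrite -scaleN1r starZ rmorphN1 scaleN1r. Qed.
Lemma starB x y : star (x - y) = star x - star y.
Proof. by rewrite starD starN. Qed.
Lemma star1 : star 1 = 1.
Proof. by have := starM (star 1) 1; rewrite mulr1 !starK mulr1 => h; symmetry. Qed.
Lemma star_sum n (F : 'I_n -> A) : star (\sum_(i < n) F i) = \sum_(i < n) star (F i).
Proof. exact: (big_morph star starD star0). Qed.

Lemma phi0 : phi 0 = 0.
Proof.
have h := phiL 1 0 0; rewrite scaler0 addr0 mul1r in h.
by apply: (addrI (phi 0)); rewrite -h addr0.
Qed.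
Lemma phiD x y : phi (x + y) = phi x + phi y.
Proof. by have := phiL 1 x y; rewrite scale1r mul1r. Qed.
Lemma phiZ c x : phi (c *: x) = c * phi x.
Proof. by have := phiL c x 0; rewrite phi0 !addr0. Qed.
Lemma phiN x : phi (- x) = - phi x.
Proof. by rewrite -scaleN1r phiZ mulN1r. Qed.
Lemma phiB x y : phi (x - y) = phi x - phi y.
Proof. by rewrite phiD phiN. Qed.
Lemma phi_sum n (F : 'I_n -> A) : phi (\sum_(i < n) F i) = \sum_(i < n) phi (F i).
Proof. exact: (big_morph phi phiD phi0). Qed.

Lemma tau0 : tau 0 = 0.
Proof.
have h := tauL 1 0 0; rewrite scaler0 addr0 scale1r in h.
by apply: (addrI (tau 0)); rewrite -h addr0.
Qed.
Lemma tauD x y : tau (x + y) = tau x + tau y.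
Proof. by have := tauL 1 x y; rewrite !scale1r. Qed.
Lemma tauZ c x : tau (c *: x) = c *: tau x.
Proof. by have := tauL c x 0; rewrite tau0 !addr0. Qed.
Lemma tauN x : tau (- x) = - tau x.
Proof. by rewrite -scaleN1r tauZ scaleN1r. Qed.
Lemma tauB x y : tau (x - y) = tau x - tau y.
Proof. by rewrite tauD tauN. Qed.

Lemma itD k x y : iter k tau (x + y) = iter k tau x + iter k tau y.
Proof. by elim: k => //= k ->; rewrite tauD. Qed.
Lemma itZ k c x : iter k tau (c *: x) = c *: iter k tau x.
Proof. by elim: k => //= k ->; rewrite tauZ. Qed.
Lemma it0 k : iter k tau 0 = 0.
Proof. by elim: k => //= k ->; rewrite tau0. Qed.
Lemma itN k x : iter k tau (- x) = - iter k tau x.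
Proof. by rewrite -scaleN1r itZ scaleN1r. Qed.
Lemma itB k x y : iter k tau (x - y) = iter k tau x - iter k tau y.
Proof. by rewrite itD itN. Qed.
Lemma it1 k : iter k tau 1 = 1.
Proof. by elim: k => //= k ->; rewrite tau1. Qed.
Lemma it_sum k n (F : 'I_n -> A) :
  iter k tau (\sum_(i < n) F i) = \sum_(i < n) iter k tau (F i).
Proof. exact: (big_morph (iter k tau) (itD k) (it0 k)). Qed.

Definition ip x y := phi (star x * y).
Lemma ipDr x y z : ip x (y + z) = ip x y + ip x z.
Proof. by rewrite /ip mulrDr phiD. Qed.
Lemma ipZr x c y : ip x (c *: y) = c * ip x y.
Proof. by rewrite /ip -scalerAr phiZ. Qed.
Lemma ipDl x y z : ip (x + y) z = ip x z + ip y z.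
Proof. by rewrite /ip starD mulrDl phiD. Qed.
Lemma ipZl c x y : ip (c *: x) y = (c^*)%C * ip x y.
Proof. by rewrite /ip starZ -scalerAl phiZ. Qed.
Lemma ipNr x y : ip x (- y) = - ip x y.
Proof. by rewrite /ip mulrN phiN. Qed.
Lemma ipNl x y : ip (- x) y = - ip x y.
Proof. by rewrite /ip starN mulNr phiN. Qed.
Lemma ipBr x y z : ip x (y - z) = ip x y - ip x z.
Proof. by rewrite ipDr ipNr. Qed.
Lemma ipBl x y z : ip (x - y) z = ip x z - ip y z.
Proof. by rewrite ipDl ipNl. Qed.
Lemma ip_sumr x n (F : 'I_n -> A) : ip x (\sum_(i < n) F i) = \sum_(i < n) ip x (F i).
Proof. by rewrite /ip mulr_sumr phi_sum. Qed.
Lemma ip_suml y n (F : 'I_n -> A) : ip (\sum_(i < n) F i) y = \sum_(i < n) ip (F i) y.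
Proof. by rewrite /ip star_sum mulr_suml phi_sum. Qed.

Definition q x := Re (ip x x).
Lemma ipxx x : ip x x = (q x)%:C.
Proof.
have := phi_pos x; rewrite -/(ip x x) lecE => /andP[/eqP h _].
by apply: ceq => //=; rewrite -h.
Qed.
Lemma q_ge0 x : 0 <= q x.
Proof. by have := phi_pos x; rewrite -/(ip x x) ipxx ler0c. Qed.
Lemma Im_ipxx x : Im (ip x x) = 0.
Proof. by rewrite ipxx. Qed.

Lemma herm x y : ip y x = ((ip x y)^*)%C.
Proof.
have h1 := Im_ipxx (x + y).
rewrite !ipDl !ipDr !ImD !Im_ipxx in h1.
have h2 := Im_ipxx (x + 'i *: y).
rewrite !ipDl !ipDr !ipZl !ipZr !ImD !Im_ipxx conj_i in h2.
rewrite !mulNr !ImN !ImiM ReiM Im_ipxx in h2.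
apply: ceq; rewrite ?ReJ ?ImJ; lra.
Qed.

Definition B x y := Re (ip x y).
Lemma Bsym x y : B x y = B y x.
Proof. by rewrite /B herm ReJ. Qed.
Lemma q_add x y : q (x + y) = q x + q y + 2 * B x y.
Proof.
rewrite /q /B !ipDl !ipDr !ReD -/(q x) -/(q y) -/(B x y) -/(B y x) (Bsym y x).
lra.
Qed.
Lemma B_rZ x (r : R) y : B x (r%:C *: y) = r * B x y.
Proof. by rewrite /B ipZr ReRM. Qed.
Lemma q_scale c x : q (c *: x) = md c ^+ 2 * q x.
Proof. by rewrite /q ipZl ipZr mulrA conjM_self ipxx -rmorphM. Qed.
Lemma q_add_r x (r : R) y : q (x + r%:C *: y) = q x + 2 * r * B x y + r ^+ 2 * q y.
Proof. rewrite q_add q_scale md_real B_rZ real_normK ?num_real //; lra. Qed.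

Lemma CS x y : B x y ^+ 2 <= q x * q y.
Proof.
apply: quad_disc; rewrite ?q_ge0 // => t.
have := q_ge0 (x + t%:C *: y); rewrite q_add_r; nra.
Qed.

Definition N x := Num.sqrt (q x).
Lemma N_ge0 x : 0 <= N x. Proof. exact: sqrtr_ge0. Qed.
Lemma N_sqr x : N x ^+ 2 = q x. Proof. by rewrite /N sqr_sqrtr // q_ge0. Qed.
Lemma B_le x y : `|B x y| <= N x * N y.
Proof.
rewrite /N -sqrtrM ?q_ge0 // -sqrtr_sqr ler_wsqrtr // CS //.
Qed.
Lemma N_add x y : N (x + y) <= N x + N y.
Proof.
rewrite -(ger0_norm (addr_ge0 (N_ge0 x) (N_ge0 y))) -sqrtr_sqr /N ler_wsqrtr //.
rewrite q_add -/(N x) -/(N y) sqrrD -!N_sqr.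
have := B_le x y; have := ler_norm (B x y); lra.
Qed.
Lemma N_scale c x : N (c *: x) = md c * N x.
Proof. by rewrite /N q_scale sqrtrM ?sqr_ge0 // sqrtr_sqr ger0_norm ?md_ge0. Qed.
Lemma N_opp x : N (- x) = N x.
Proof.
rewrite -scaleN1r N_scale mdN; have -> : md (1 : C) = 1 by rewrite /md normr1.
by rewrite mul1r.
Qed.
Lemma N_sym x y : N (x - y) = N (y - x).
Proof. by rewrite -N_opp opprB. Qed.
Lemma N_sub x y : N (x - y) <= N x + N y.
Proof. by rewrite -(N_opp y) N_add. Qed.
Lemma N0 : N 0 = 0.
Proof. by rewrite -(scale0r 0) N_scale -(rmorph0 (real_complex R)) md_real normr0 mul0r. Qed.
Lemma N_sum n (F : 'I_n -> A) : N (\sum_(i < n) F i) <= \sum_(i < n) N (F i).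
Proof.
elim: n F => [|n IH] F; first by rewrite !big_ord0 N0.
rewrite !big_ord_recr /=; apply: le_trans (N_add _ _) _.
by rewrite lerD2r IH.
Qed.
Lemma q_tau x : q (tau x) <= q x.
Proof. by have := tau_contr x; rewrite -/(ip _ _) -/(ip _ _) !ipxx lecR. Qed.
Lemma N_tau x : N (tau x) <= N x.
Proof. by rewrite /N ler_wsqrtr // q_tau. Qed.
Lemma N_iter k x : N (iter k tau x) <= N x.
Proof. elim: k => //= k IH; exact: le_trans (N_tau _) IH. Qed.

Lemma phinormE x : phinorm star phi x = (N x)%:C.
Proof. by rewrite /phinorm -/(ip x x) ipxx sqrtC_real // q_ge0. Qed.

Lemma Im_ip x y : Im (ip x y) = B x ((- 'i) *: y).
Proof. by rewrite /B ipZr mulNr ReN ReiM opprK. Qed.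
Lemma md_ip x y : md (ip x y) <= 2 * (N x * N y).
Proof.
apply: le_trans (md_le _) _; rewrite Im_ip -/(B x y).
have := B_le x y; have := B_le x ((- 'i) *: y).
rewrite N_scale mdN md_i mul1r; lra.
Qed.

Lemma phi_ip x : phi x = ip 1 x.
Proof. by rewrite /ip star1 mul1r. Qed.
Lemma q1 : q 1 = 1.
Proof. by rewrite /q -phi_ip phi1. Qed.
Lemma N1 : N 1 = 1.
Proof. by rewrite /N q1 sqrtr1. Qed.
Lemma md_phi x : md (phi x) <= 2 * N x.
Proof. by rewrite phi_ip; apply: le_trans (md_ip _ _) _; rewrite N1 mul1r. Qed.
Lemma phi_scal (a : C) : phi (a%:A) = a.
Proof. by rewrite phiZ phi1 mulr1. Qed.
Lemma phi_star x : phi (star x) = ((phi x)^*)%C.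
Proof. by rewrite -[star x]mulr1 -/(ip x 1) herm -phi_ip. Qed.

Lemma B1_tau x : B 1 (tau x) = B 1 x.
Proof.
apply/eqP; rewrite -subr_eq0; apply/eqP.
apply: (@lin_zero _ _ (q x)); first exact: q_ge0.
move=> t; have := q_tau (1 + t%:C *: x).
rewrite tauD tauZ tau1 !q_add_r.
have := q_ge0 (tau x); have := sqr_ge0 t.
move=> h1 h2 h3.
have : t ^+ 2 * q (tau x) >= 0 by rewrite mulr_ge0.
move=> h4; nra.
Qed.

Lemma phi_tau x : phi (tau x) = phi x.
Proof.
apply: ceq; rewrite !phi_ip ?Im_ip -?tauZ; exact: B1_tau.
Qed.
Lemma phi_iter k x : phi (iter k tau x) = phi x.
Proof. by elim: k => //= k <-; rewrite phi_tau. Qed.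


Definition M n y := ((n%:R : C)^-1) *: \sum_(k < n) iter k tau y.

Lemma cesaro_M x y n : cesaro_corr phi tau x y n = phi (x * M n y).
Proof. by rewrite /cesaro_corr /M -scalerAr phiZ; congr (_ * _); rewrite mulr_sumr phi_sum. Qed.

Lemma M0 y : M 0 y = 0.
Proof. by rewrite /M big_ord0 scaler0. Qed.
Lemma MD n y z : M n (y + z) = M n y + M n z.
Proof. by rewrite /M (eq_bigr _ (fun (k : 'I_n) _ => itD k y z)) big_split scalerDr. Qed.
Lemma MZ n c y : M n (c *: y) = c *: M n y.
Proof.
by rewrite /M (eq_bigr _ (fun (k : 'I_n) _ => itZ k c y)) -scaler_sumr !scalerA mulrC.
Qed.
Lemma MN n y : M n (- y) = - M n y.
Proof. by rewrite -scaleN1r MZ scaleN1r. Qed.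
Lemma MB n y z : M n (y - z) = M n y - M n z.
Proof. by rewrite MD MN. Qed.
Lemma M_sum n m (F : 'I_m -> A) : M n (\sum_(i < m) F i) = \sum_(i < m) M n (F i).
Proof.
elim: m F => [|m IH] F.
  by rewrite !big_ord0; have := MB n 0 0; rewrite subrr => ->; rewrite subrr.
by rewrite !big_ord_recr /= MD IH.
Qed.

Lemma invn_C n : ((n%:R : C)^-1) = ((n%:R : R)^-1)%:C.
Proof. by rewrite fmorphV rmorph_nat. Qed.

Lemma md_invn n : md ((n%:R : C)^-1) = (n%:R : R)^-1.
Proof. by rewrite invn_C md_real ger0_norm // invr_ge0 ler0n. Qed.

Lemma N_M n y : N (M n y) <= N y.
Proof.
case: n => [|n]; first by rewrite M0 N0 N_ge0.
rewrite /M N_scale md_invn ler_pdivrMl ?ltr0Sn //.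
apply: le_trans (N_sum _ _) _.
apply: le_trans (_ : \sum_(k < n.+1) N y <= _); last by rewrite sumr_const card_ord mulr_natl.
by apply: ler_sum => k _; apply: N_iter.
Qed.

Lemma M_scal n (a : C) : (0 < n)%N -> M n (a%:A) = a%:A.
Proof.
move=> n0; rewrite /M.
under eq_bigr => k _ do rewrite itZ it1.
rewrite sumr_const card_ord -(@scaler_nat C A n) !scalerA mulVf ?scale1r //.
  by rewrite mul1r.
by rewrite pnatr_eq0 -lt0n.
Qed.


Lemma N_iter_diff j z : N (z - iter j tau z) <= j%:R * N (z - tau z).
Proof.
elim: j => [|j IH]; first by rewrite /= subrr N0 mul0r.
have -> : z - iter j.+1 tau z = (z - tau z) + tau (z - iter j tau z).
  by rewrite /= tauB addrA subrK.
apply: le_trans (N_add _ _) _; have := le_trans (N_tau _) IH; rewrite mulrSr; nra.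
Qed.

Lemma N_M_diff k z : (0 < k)%N -> N (z - M k z) <= k%:R * N (z - tau z).
Proof.
move=> k0.
have kC : (k%:R : C) != 0 by rewrite pnatr_eq0 -lt0n.
have -> : z - M k z = ((k%:R : C)^-1) *: \sum_(j < k) (z - iter j tau z).
  rewrite sumrB sumr_const card_ord -(@scaler_nat C A k) scalerBr scalerA mulVf //.
  by rewrite scale1r.
rewrite N_scale md_invn ler_pdivrMl ?ltr0n //.
apply: le_trans (N_sum _ _) _.
apply: le_trans (_ : \sum_(j < k) (k%:R * N (z - tau z)) <= _); last first.
  by rewrite sumr_const card_ord !mulr_natl.
apply: ler_sum => j _; apply: le_trans (N_iter_diff _ _) _.
by rewrite ler_wpM2r ?N_ge0 // ler_nat ltnW.
Qed.

Lemma N_M_shift n k y : N (M n (iter k tau y) - M n y) <= (n%:R)^-1 * (2 * k%:R * N y).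
Proof.
pose S k := \sum_(j < n) iter (j + k) tau y.
have eM k' : M n (iter k' tau y) = ((n%:R : C)^-1) *: S k'.
  by rewrite /M /S; congr (_ *: _); apply: eq_bigr => j _; rewrite iterD.
have e0 : M n y = ((n%:R : C)^-1) *: S 0%N.
  by rewrite -(eM 0%N).
have step k' : S k'.+1 - S k' = iter (n + k') tau y - iter k' tau y.
  rewrite /S -sumrB.
  rewrite (eq_bigr (fun j : 'I_n => (fun i => iter (i + k') tau y) (nat_of_ord j).+1
                                     - (fun i => iter (i + k') tau y) (nat_of_ord j))); last first.
    by move=> j _ /=; rewrite ?addnS ?addSn.
  rewrite -(big_mkord xpredT (fun j => (fun i => iter (i + k') tau y) j.+1
                                       - (fun i => iter (i + k') tau y) j)).
  by rewrite telescope_sumr.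
have hS k' : N (S k' - S 0%N) <= 2 * k'%:R * N y.
  elim: k' => [|k' IH]; first by rewrite subrr N0 mulr0 mul0r.
  have -> : S k'.+1 - S 0%N = (S k'.+1 - S k') + (S k' - S 0%N) by rewrite addrA subrK.
  apply: le_trans (N_add _ _) _; rewrite step.
  have : N (iter (n + k') tau y - iter k' tau y) <= 2 * N y.
    apply: le_trans (N_sub _ _) _; have := N_iter (n + k') y; have := N_iter k' y; lra.
  move=> h; rewrite mulrSr; have := N_ge0 y; nra.
rewrite eM e0 -scalerBr N_scale md_invn; apply: ler_wpM2l; first by rewrite invr_ge0 ler0n.
exact: hS.
Qed.


Definition Kset y v := exists L (w : nat -> R),
  [/\ forall k, 0 <= w k, forall k, (L <= k)%N -> w k = 0,
      \sum_(k < L) w k = 1 & v = \sum_(k < L) (w k)%:C *: iter k tau y].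

Lemma K_y y : Kset y y.
Proof.
exists 1%N, (fun k => if k == 0%N then 1 else 0); split.
- by move=> k; case: eqP.
- by move=> k; case: eqP => // ->.
- by rewrite big_ord1.
- by rewrite big_ord1 /= scale1r.
Qed.

Lemma K_mid y v v' : Kset y v -> Kset y v' -> Kset y ((2^-1 : R)%:C *: (v + v')).
Proof.
move=> [L [w [w0 wL w1 ->]]] [L' [w' [w0' wL' w1' ->]]].
exists (maxn L L'), (fun k => 2^-1 * (w k + w' k)); split.
- by move=> k; rewrite mulr_ge0 ?invr_ge0 ?ler0n // addr_ge0.
- by move=> k; rewrite geq_max => /andP[/wL -> /wL' ->]; rewrite addr0 mulr0.
- rewrite -mulr_sumr big_split /=.
  rewrite (sum_widen (F := w) (leq_maxl L L') wL) (sum_widen (F := w') (leq_maxr L L') wL').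
  by rewrite w1 w1' mulVf // pnatr_eq0.
- rewrite -(sum_widen (F := fun k => (w k)%:C *: iter k tau y) (leq_maxl L L')); last first.
    by move=> k /wL ->; rewrite scale0r.
  rewrite -(sum_widen (F := fun k => (w' k)%:C *: iter k tau y) (leq_maxr L L') ); last first.
    by move=> k /wL' ->; rewrite scale0r.
  rewrite -big_split scaler_sumr /=; apply: eq_bigr => k _.
  by rewrite -scalerDl scalerA -rmorphD -rmorphM.
Qed.

Lemma K_tau y v : Kset y v -> Kset y (tau v).
Proof.
move=> [L [w [w0 wL w1 ->]]].
exists L.+1, (fun k => if k is k'.+1 then w k' else 0); split.
- by move=> [|k].
- by move=> [|k] // /wL.
- by rewrite big_ord_recl add0r.
- rewrite big_ord_recl scale0r add0r.
  have -> : tau (\sum_(k < L) (w k)%:C *: iter k tau y) = iter 1 tau (\sum_(k < L) (w k)%:C *: iter k tau y) by [].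
  rewrite it_sum; apply: eq_bigr => k _; rewrite itZ /=; by [].
Qed.

Lemma K_phi y v : Kset y v -> phi v = phi y.
Proof.
move=> [L [w [w0 wL w1 ->]]].
rewrite phi_sum (eq_bigr (fun k : 'I_L => (w k)%:C * phi y)); last first.
  by move=> k _; rewrite phiZ phi_iter.
by rewrite -mulr_suml -rmorph_sum w1 mul1r.
Qed.

Lemma K_M y v : Kset y v -> exists L : nat,
  forall n, N (M n v - M n y) <= (n%:R)^-1 * (2 * L%:R * N y).
Proof.
move=> [L [w [w0 wL w1 ->]]]; exists L => n.
have -> : M n y = \sum_(k < L) (w k)%:C *: M n y.
  by rewrite -scaler_suml -rmorph_sum w1 scale1r.
rewrite M_sum -sumrB.
rewrite (eq_bigr (fun k : 'I_L => (w k)%:C *: (M n (iter k tau y) - M n y))); last first.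
  by move=> k _; rewrite MZ scalerBr.
apply: le_trans (N_sum _ _) _.
apply: le_trans (_ : \sum_(k < L) w k * ((n%:R)^-1 * (2 * L%:R * N y)) <= _); last first.
  by rewrite -mulr_suml w1 mul1r.
apply: ler_sum => k _; rewrite N_scale md_real ger0_norm //.
apply: ler_wpM2l => //; apply: le_trans (N_M_shift _ _ _) _.
apply: ler_wpM2l; first by rewrite invr_ge0 ler0n.
apply: ler_wpM2r; first exact: N_ge0.
by rewrite ler_wpM2l // ler_nat ltnW.
Qed.


Lemma N_le x (e : R) : 0 <= e -> q x <= e ^+ 2 -> N x <= e.
Proof. by move=> e0 h; rewrite /N -(ger0_norm e0) -sqrtr_sqr ler_wsqrtr. Qed.
Lemma N_lt x (e : R) : 0 < e -> q x < e ^+ 2 -> N x < e.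
Proof.
move=> e0 h; rewrite /N -(ger0_norm (ltW e0)) -sqrtr_sqr ltr_sqrt //.
by rewrite exprn_gt0.
Qed.

Lemma cvgC_phinorm (f : nat -> A) :
  cvgC (fun n => phinorm star phi (f n)) 0 <->
  (forall e : R, 0 < e -> exists N0, forall n, (N0 <= n)%N -> N (f n) < e).
Proof.
rewrite cvgCP; split=> h e /h [N0 hN]; exists N0 => n /hN;
by rewrite phinormE subr0 md_real ger0_norm ?N_ge0.
Qed.

Lemma phi_cauchyP (a : nat -> A) :
  phi_cauchy star phi a <->
  (forall e : R, 0 < e -> exists N0, forall m n, (N0 < m)%N -> (N0 < n)%N -> N (a m - a n) <= e).
Proof.
split=> h e /h [N0 hN]; exists N0 => m n hm hn; have := hN m n hm hn;
by rewrite phinormE lecR.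
Qed.

Lemma par x y : q (x - y) = 2 * q x + 2 * q y - q (x + y).
Proof.
have hq : q (- y) = q y by rewrite -!N_sqr N_opp.
have hB : B x (- y) = - B x y by rewrite /B ipNr ReN.
rewrite !q_add hq hB; lra.
Qed.

Lemma q_mid x y : 4 * q ((2^-1 : R)%:C *: (x + y)) = q (x + y).
Proof.
rewrite q_scale md_real ger0_norm ?invr_ge0 ?ler0n //.
rewrite mulrA -[X in X * _ = _]/(4 * (2^-1 * 2^-1)) mulrA.
have -> : (4 * 2^-1 * 2^-1 : R) = 1 by field.
by rewrite mul1r.
Qed.


Lemma K_approach y : ergodic star phi tau ->
  forall e : R, 0 < e -> exists v, Kset y v /\ N (v - (phi y)%:A) < e.
Proof.
move=> erg.
pose Sq : set R := fun r => exists v, Kset y v /\ r = q v.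
have hlb : has_lbound Sq by exists 0 => r [v [_ ->]]; exact: q_ge0.
have hinf : has_inf Sq by split=> //; exists (q y), y; split=> //; exact: K_y.
set m2 := inf Sq.
have lb v : Kset y v -> m2 <= q v by move=> hv; apply: (ge_inf hlb); exists v.
have adh j : exists v, Kset y v /\ q v < m2 + (j.+1%:R)^-1.
  have ej : 0 < (j.+1%:R : R)^-1 by rewrite invr_gt0 ltr0Sn.
  have [r [v [hv ->]] hr] := inf_adherent ej hinf.
  by exists v.
have [vs hvs] := choice adh.
have hC i j : q (vs i - vs j) <= 2 * (i.+1%:R)^-1 + 2 * (j.+1%:R)^-1.
  have [Ki hi] := hvs i; have [Kj hj] := hvs j.
  have hm := lb _ (K_mid _ _ _ Ki Kj).
  rewrite par -q_mid; move: hi hj hm; set di := (i.+1%:R : R)^-1; set dj := (j.+1%:R : R)^-1; clearbody di dj m2 => hi hj hm; lra.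
have hT j : q (tau (vs j) - vs j) <= 4 * (j.+1%:R)^-1.
  have [Kj hj] := hvs j.
  have hm := lb _ (K_mid _ _ _ (K_tau _ _ Kj) Kj).
  have := q_tau (vs j).
  rewrite par -q_mid; move: hj hm; set dj := (j.+1%:R : R)^-1; clearbody dj m2 => hj hm; lra.
have h1 : cvgC (fun n => phinorm star phi (tau (vs n) - vs n)) 0.
  apply/cvgC_phinorm => e e0.
  have e2 : 0 < e ^+ 2 / 4 by rewrite divr_gt0 ?exprn_gt0.
  have [N0 hN0] := small_inv e2; exists N0 => n hn.
  apply: N_lt => //; move: (hT n) (hN0 n hn); move: (n.+1%:R : R)^-1 => d; lra.
have h2 : phi_cauchy star phi vs.
  apply/phi_cauchyP => e e0.
  have e2 : 0 < e ^+ 2 / 4 by rewrite divr_gt0 ?exprn_gt0.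
  have [N0 hN0] := small_inv e2; exists N0 => m n hm hn.
  apply: N_le; first exact: ltW.
  move: (hC m n) (hN0 m (ltnW hm)) (hN0 n (ltnW hn)).
  move: (m.+1%:R : R)^-1 (n.+1%:R : R)^-1 => d1 d2; lra.
have [alpha /cvgC_phinorm halpha] := erg vs h1 h2.
have ea : alpha = phi y.
  apply/eqP; rewrite -subr_eq0; apply/eqP; apply: md_small => e e0.
  have e2 : 0 < e / 2 by rewrite divr_gt0.
  have [N0 hN0] := halpha _ e2.
  have [KN _] := hvs N0.
  have := md_phi (vs N0 - alpha%:A); rewrite phiB phi_scal (K_phi _ _ KN) mdB.
  have := hN0 N0 (leqnn _); lra.
move=> e e0; have [N0 hN0] := halpha _ e0.
have [KN _] := hvs N0.
by exists (vs N0); split => //; rewrite -ea; apply: hN0.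
Qed.


Lemma part1 : ergodic star phi tau ->
  forall x y, cvgC (cesaro_corr phi tau x y) (phi x * phi y).
Proof.
move=> erg x y; apply/cvgCP => e e0.
set c := N (star x); pose a : A := (phi y)%:A.
have hc : 0 <= c := N_ge0 (star x).
have c1 : 0 < 4 * (c + 1) by rewrite mulr_gt0 // ltr_wpDl.
set eps := e / (4 * (c + 1)).
have eps0 : 0 < eps by rewrite divr_gt0.
have heps : eps * (4 * (c + 1)) = e by rewrite /eps divfK // gt_eqF.
have [v [Kv hv]] := K_approach y erg _ eps0.
have [L hL] := K_M _ _ Kv.
set K := 2 * L%:R * N y.
have hK : 0 <= K by rewrite /K !mulr_ge0 ?ler0n ?N_ge0.
have K1 : 0 < K + 1 by rewrite ltr_wpDl.
have [n0 hn0] := small_inv (divr_gt0 eps0 K1).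
exists n0.+1 => -[//|m] hm.
have hd := hn0 m hm.
have hd' : (m.+1%:R : R)^-1 * (K + 1) < eps by rewrite -ltr_pdivlMr.
have hd0 : 0 <= (m.+1%:R : R)^-1 by rewrite invr_ge0 ler0n.
have hMy : N (M m.+1 y - a) < 2 * eps.
  have -> : M m.+1 y - a = (M m.+1 y - M m.+1 v) + M m.+1 (v - a).
    by rewrite MB M_scal // addrA subrK.
  apply: le_lt_trans (N_add _ _) _.
  have h1 := hL m.+1; rewrite -/K N_sym in h1.
  have h2 := N_M m.+1 (v - a).
  move: h1 h2 hd' hd0 hv; move: ((m.+1%:R : R)^-1) => d; nra.
rewrite cesaro_M.
have -> : phi (x * M m.+1 y) - phi x * phi y = ip (star x) (M m.+1 y - a).
  by rewrite /ip starK mulrBr phiB mulr_algr phiZ mulrC.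
apply: le_lt_trans (md_ip _ _) _; rewrite -/c.
have hN := N_ge0 (M m.+1 y - a).
move: hMy hN heps; move: (N (M m.+1 y - a)) => t; nra.
Qed.


Section Part2.
Variables (S T : A -> Prop).
Hypothesis hyp : forall x0 y : A, S x0 -> T y ->
  cvgC (cesaro_corr phi tau (star x0) y) (phi (star x0) * phi y).

Lemma hyp' s t : S s -> T t -> cvgC (fun n => ip s (M n t)) (ip s 1 * ip 1 t).
Proof.
move=> hs ht; have h := hyp _ _ hs ht.
have -> : ip s 1 * ip 1 t = phi (star s) * phi t by rewrite -phi_ip /ip mulr1.
by apply: (cvgC_ext _ h) => n; rewrite cesaro_M.
Qed.

Lemma E_span n1 (c : 'I_n1 -> C) (s : 'I_n1 -> A) n2 (d : 'I_n2 -> C) (t : 'I_n2 -> A) :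
  (forall i, S (s i)) -> (forall j, T (t j)) ->
  let g := \sum_(i < n1) c i *: s i in let f := \sum_(j < n2) d j *: t j in
  cvgC (fun n => ip g (M n f)) (ip g 1 * ip 1 f).
Proof.
move=> hs ht g f.
have -> : ip g 1 * ip 1 f =
    \sum_(i < n1) ((c i)^*)%C * \sum_(j < n2) d j * (ip (s i) 1 * ip 1 (t j)).
  rewrite /g /f ip_suml ip_sumr mulr_suml; apply: eq_bigr => i _.
  rewrite ipZl mulr_sumr mulr_sumr; apply: eq_bigr => j _.
  by rewrite ipZr; ring.
apply: (@cvgC_ext _ (fun n => \sum_(i < n1) ((c i)^*)%C * \sum_(j < n2) d j * ip (s i) (M n (t j)))).
  move=> n; rewrite /g /f ip_suml; apply: eq_bigr => i _.
  rewrite ipZl M_sum ip_sumr; congr (_ * _); apply: eq_bigr => j _.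
  by rewrite MZ (ipZr (s i) (d j)).
apply: cvgC_sum => i; apply: cvgC_scale; apply: cvgC_sum => j; apply: cvgC_scale.
exact: hyp'.
Qed.

Lemma ler_pM4 (a b c d : R) : 0 <= a -> 0 <= c -> a <= b -> c <= d -> a * c <= b * d.
Proof. by move=> a0 c0 ab cd; apply: ler_pM. Qed.

Lemma E_all : phi_total star phi S -> phi_total star phi T ->
  forall g f, cvgC (fun n => ip g (M n f)) (ip g 1 * ip 1 f).
Proof.
move=> tS tT g f; apply: cvgC_approx => d d0.
have hNg := N_ge0 g; have hNf := N_ge0 f.
set K := N g + N f + 1.
have K0 : 0 < K by rewrite /K ltr_wpDl // addr_ge0.
have dK : 0 < 4 * K + d by rewrite addr_gt0 // mulr_gt0.
set eta := d / (4 * K + d).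
have eta0 : 0 < eta by rewrite divr_gt0.
have heta : eta * (4 * K + d) = d by rewrite /eta divfK // gt_eqF.
have eta1 : eta <= 1 by nra.
have etaK : 4 * eta * K <= d by nra.
have ee : eta * eta <= eta by rewrite -[X in _ <= X]mulr1 ler_wpM2l // ltW.
move: etaK; rewrite /K => etaK.
have [n1 [c [s [hs hg]]]] := tS g _ eta0.
have [n2 [dd [t [ht hf]]]] := tT f _ eta0.
rewrite phinormE ltcR in hg; rewrite phinormE ltcR in hf.
set g' := \sum_(i < n1) c i *: s i in hg *.
set f' := \sum_(j < n2) dd j *: t j in hf *.
have hg' : N g' <= N g + eta.
  have -> : g' = g - (g - g') by rewrite opprB addrC subrK.
  by apply: le_trans (N_sub _ _) _; rewrite lerD2l ltW.
have hNg' := N_ge0 g'.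
exists (fun n => ip g' (M n f')), (ip g' 1 * ip 1 f'); split.
- exact: E_span.
- move=> n.
  have -> : ip g (M n f) - ip g' (M n f') = ip (g - g') (M n f) + ip g' (M n (f - f')).
    by rewrite (ipBl g g') (MB n f f') (ipBr g') addrA subrK.
  apply: le_trans (mdD _ _) _.
  have h1 : md (ip (g - g') (M n f)) <= 2 * (eta * N f).
    apply: le_trans (md_ip _ _) _; rewrite ler_pM2l //.
    by apply: ler_pM4; [exact: N_ge0 | exact: N_ge0 | exact: ltW | exact: N_M].
  have h2 : md (ip g' (M n (f - f'))) <= 2 * ((N g + eta) * eta).
    apply: le_trans (md_ip _ _) _; rewrite ler_pM2l //.
    apply: ler_pM4; [exact: N_ge0 | exact: N_ge0 | exact: hg' | ]; apply: le_trans (N_M _ _) _; exact: ltW.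
  nra.
- have -> : ip g 1 * ip 1 f - ip g' 1 * ip 1 f' = ip (g - g') 1 * ip 1 f + ip g' 1 * ip 1 (f - f').
    by rewrite (ipBl g g') (ipBr 1 f f'); ring.
  apply: le_trans (mdD _ _) _; rewrite !mdM.
  have h1 : md (ip (g - g') 1) <= 2 * eta.
    by apply: le_trans (md_ip _ _) _; rewrite N1 mulr1 ler_pM2l // ltW.
  have h2 : md (ip 1 f) <= 2 * N f.
    by apply: le_trans (md_ip _ _) _; rewrite N1 mul1r.
  have h3 : md (ip g' 1) <= 2 * (N g + eta).
    by apply: le_trans (md_ip _ _) _; rewrite N1 mulr1 ler_pM2l.
  have h4 : md (ip 1 (f - f')) <= 2 * eta.
    by apply: le_trans (md_ip _ _) _; rewrite N1 mul1r ler_pM2l // ltW.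
  have := ler_pM4 _ _ _ _ (md_ge0 _) (md_ge0 _) h1 h2.
  have := ler_pM4 _ _ _ _ (md_ge0 _) (md_ge0 _) h3 h4.
  nra.
Qed.

Lemma part2 : phi_total star phi S -> phi_total star phi T -> ergodic star phi tau.
Proof.
move=> tS tT a /cvgC_phinorm h1 /phi_cauchyP h2.
have [alpha halpha] : exists alpha : C, forall e : R, 0 < e ->
    exists N0, forall n, (N0 <= n)%N -> md (phi (a n) - alpha) <= e.
  apply: cauchyC => e e0.
  have e2 : 0 < e / 2 by rewrite divr_gt0.
  have [N0 hN0] := h2 _ e2; exists N0.+1 => m n hm hn.
  rewrite -phiB; apply: le_trans (md_phi _) _; have := hN0 m n hm hn; lra.
exists alpha; apply/cvgC_phinorm => e e0.
set del := e / 4.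
have del0 : 0 < del by rewrite divr_gt0.
have [N1 hN1] := halpha _ del0.
have [N2 hN2] := h2 _ del0.
exists (maxn N1 N2).+1 => m; rewrite gtn_max => /andP[m1 m2].
pose b := a m - alpha%:A.
have hphib : md (phi b) <= del by rewrite /b phiB phi_scal; apply: hN1; apply: ltnW.
have dd0 : 0 < del ^+ 2 by rewrite exprn_gt0.
have [K0 hK0] := (cvgCP _ _).1 (E_all tS tT b b) _ dd0.
pose k := K0.+1.
have hk := hK0 k (leqnSn K0).
have k0 : 0 < (k%:R : R) by rewrite ltr0Sn.
have [N3 hN3] := h1 _ (divr_gt0 del0 k0).
pose n := maxn N3 N2.+1.
have n3 : (N3 <= n)%N by rewrite leq_maxl.
have n2 : (N2 < n)%N by rewrite leq_maxr.
pose b' := a n - alpha%:A.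
have hLim : ip b 1 * ip 1 b = ((md (phi b)) ^+ 2)%:C.
  by rewrite -phi_ip /ip mulr1 phi_star conjM_self.
have F1 : q b = Re (ip b (M k b)) + B b (b - M k b).
  by rewrite /q /B (ipBr b b (M k b)) ReB; lra.
have F2 : Re (ip b (M k b)) <= md (phi b) ^+ 2 + del ^+ 2.
  have -> : ip b (M k b) = ip b 1 * ip 1 b + (ip b (M k b) - ip b 1 * ip 1 b) by rewrite addrC subrK.
  rewrite ReD hLim Re_real lerD2l.
  apply: le_trans (ler_norm _) _; apply: le_trans (Re_le_md _) _.
  rewrite -hLim; exact: (ltW hk).
have F3 : B b (b - M k b) <= N b * N (b - M k b).
  exact: le_trans (ler_norm _) (B_le _ _).
have F4 : N (b - M k b) <= 2 * N (a m - a n) + k%:R * N (a n - tau (a n)).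
  have -> : b - M k b = (b - b') + ((b' - M k b') + (M k b' - M k b)).
    exact: (sub3 b b' (M k b') (M k b)).
  apply: le_trans (N_add _ _) _.
  have -> : b - b' = a m - a n by rewrite subsub.
  rewrite -MB.
  apply: le_trans (lerD (lexx _) (N_add _ _)) _.
  have h3 : N (M k (b' - b)) <= N (a m - a n).
    by apply: le_trans (N_M _ _) _; rewrite (N_sym b' b) /b /b' subsub.
  have h4 := N_M_diff k b' (ltn0Sn K0).
  have e4 : b' - tau b' = a n - tau (a n) by rewrite /b' tauB tauZ tau1 subsub.
  rewrite e4 in h4.
  lra.
have B1 : N (a m - a n) <= del by apply: hN2.
have B2 : k%:R * N (a n - tau (a n)) <= del.
  have := hN3 n n3; rewrite N_sym => h.
  by rewrite -ler_pdivlMl // ltW // mulrC.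
have hNb := N_ge0 b.
have hNd := N_ge0 (b - M k b).
have hq : N b ^+ 2 = q b by rewrite N_sqr.
have hmd := md_ge0 (phi b).
have hmd2 : md (phi b) ^+ 2 <= del ^+ 2 by rewrite ler_pXn2r // ?nnegrE // ltW.
have he : e = 4 * del by rewrite /del mulrC divfK // pnatr_eq0.
rewrite he.
move: hq F1 F2 F3 F4 B1 B2 hNb hNd hmd2 del0.
move: (N b) (q b) (N (b - M k b)) (Re (ip b (M k b))) (B b (b - M k b)) (md (phi b)) => t qb nd r1 r2 mp.
move: (N (a m - a n)) (k%:R * N (a n - tau (a n))) => x1 x2.
nra.
Qed.

End Part2.

End Sys.

End Aux.

Theorem proposition4p6 (R : realType) (A : algType R[i]) (star : A -> A)
    (phi : A -> R[i]) (tau : A -> A) (S T : A -> Prop) :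
  is_star_dyn_system star phi tau ->
  phi_total star phi S -> phi_total star phi T ->
  (ergodic star phi tau ->
     forall x y : A, cvgC (cesaro_corr phi tau x y) (phi x * phi y)) /\
  ((forall x0 y : A, S x0 -> T y ->
      cvgC (cesaro_corr phi tau (star x0) y) (phi (star x0) * phi y)) ->
   ergodic star phi tau).
Proof.
move=> H tS tT; split.
  exact: (@Aux.part1 _ _ _ _ _ H).
move=> hyp; exact: (@Aux.part2 _ _ _ _ _ H S T hyp tS tT).
Qed.
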